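(* Let $(X_1,X_2,X_3)$ be nonnegative random variables with a common marginal survival function $\bar F$ and Farlie–Gumbel–Morgenstern survival copula $\hat C(u_1,u_2,u_3)=u_1u_2u_3[1+\theta(1-u_1)(1-u_2)(1-u_3)]$, $-1\le\theta\le1$. Let $t>0$ with $0<k:=\bar F(t)<1$, and define $\mathbf{X}_t=(X_1-t,X_2-t\mid X_1>t,X_2>t)$, $\mathbf{X}^{(3)}_t=(X_1-t,X_2-t\mid X_1>t,X_2>t,X_3\le t)$, $\mathbf{X}^*_t=(X_1-t,X_2-t\mid X_1>t,X_2>t,X_3>t)$. Then the joint survival functions of these three vectors are $\hat D(\bar F_t(x_1),\bar F_t(x_2))$ with $\bar F_t(x)=\bar F(t+x)/\bar F(t)$ and respective dual distortions $\hat D_t(u_1,u_2)=u_1u_2$, $\hat D^{(3)}_t(u_1,u_2)=u_1u_2\dfrac{1-\theta k(1-ku_1)(1-ku_2)}{1-\theta k(1-k)^2}$, $\hat D^{*}_t(u_1,u_2)=u_1u_2\dfrac{1+\theta(1-ku_1)(1-ku_2)(1-k)}{1+\theta(1-k)^3}$. Moreover $\hat D^*_t\le\hat D_t\le\hat D^{(3)}_t$ when $\theta\le0$ and $\hat D^*_t\ge\hat D_t\ge\hat D^{(3)}_t$ when $\theta\ge0$; consequently $\mathbf{X}^*_t\le_{uo}\mathbf{X}_t\le_{uo}\mathbf{X}^{(3)}_t$ for $\theta\le0$, and the reverse orderings hold for $\theta\ge0$.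
   Context: Upper orthant order: $\mathbf{X}\le_{uo}\mathbf{Y}$ iff $\Pr(\mathbf{X}>\mathbf{x})\le\Pr(\mathbf{Y}>\mathbf{x})$ for all $\mathbf{x}$ (componentwise). *)

(* Defs.v *)
From HB Require Import structures.
From mathcomp Require Import all_boot all_order all_algebra.
From mathcomp Require Import all_classical all_reals all_analysis.
Set Implicit Arguments. Unset Strict Implicit. Unset Printing Implicit Defensive.
Import Order.TTheory GRing.Theory Num.Theory.
Local Open Scope classical_set_scope.
Local Open Scope ring_scope.

Definition FGM3 (R : realType) (theta u1 u2 u3 : R) : R :=
  u1 * u2 * u3 * (1 + theta * (1 - u1) * (1 - u2) * (1 - u3)).

Definition condP d (T : measurableType d) (R : realType) (P : probability T R)
  (A B : set T) : R := fine (P (A `&` B)) / fine (P B).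

Definition cond_surv2 d (T : measurableType d) (R : realType) (P : probability T R)
  (Y1 Y2 : T -> R) (B : set T) (x1 x2 : R) : R :=
  condP P [set w | x1 < Y1 w /\ x2 < Y2 w] B.

Definition uo_le2 d (T : measurableType d) (R : realType) (P : probability T R)
  (Y1 Y2 : T -> R) (B : set T) (Z1 Z2 : T -> R) (C : set T) : Prop :=
  forall x1 x2 : R, cond_surv2 P Y1 Y2 B x1 x2 <= cond_surv2 P Z1 Z2 C x1 x2.

Definition Dt (R : realType) (u1 u2 : R) : R := u1 * u2.
Definition D3t (R : realType) (theta k u1 u2 : R) : R :=
  u1 * u2 * ((1 - theta * k * (1 - k * u1) * (1 - k * u2))
             / (1 - theta * k * (1 - k) ^+ 2)).
Definition Dstart (R : realType) (theta k u1 u2 : R) : R :=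
  u1 * u2 * ((1 + theta * (1 - k * u1) * (1 - k * u2) * (1 - k))
             / (1 + theta * (1 - k) ^+ 3)).

(* Main.v *)
Require Import Defs.
From HB Require Import structures.
From mathcomp Require Import all_boot all_order all_algebra.
From mathcomp Require Import all_classical all_reals all_analysis.
From mathcomp Require Import ring lra.
Import Order.TTheory GRing.Theory Num.Theory.
Local Open Scope classical_set_scope.
Local Open Scope ring_scope.

Lemma alg_t (R : realType) (th a b k : R) : k != 0 ->
  FGM3 th a b 1 / FGM3 th k k 1 = Dt (a/k) (b/k).
Proof. by move=> k0; rewrite /FGM3 /Dt; field; rewrite k0. Qed.

Lemma alg_s (R : realType) (th a b k : R) : k != 0 -> 1 + th * (1-k)^+3 != 0 ->
  FGM3 th a b k / FGM3 th k k k = Dstart th k (a/k) (b/k).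
Proof. by move=> k0 d0; rewrite /FGM3 /Dstart; field; rewrite k0 /= -?mulrA ?d0. Qed.

Lemma alg_3 (R : realType) (th a b k : R) : k != 0 -> 1 - k != 0 ->
  1 - th * k * (1-k)^+2 != 0 ->
  (FGM3 th a b 1 - FGM3 th a b k) / (FGM3 th k k 1 - FGM3 th k k k) = D3t th k (a/k) (b/k).
Proof. move=> k0 k1 d0; rewrite /FGM3 /D3t; field; rewrite d0 k0 /=.
have -> : k * k - k * k * k * (1 + th * (1 - k) * (1 - k) * (1 - k)) =
  k * k * (1 - k) * (1 - th * k * (1 - k) ^+ 2) by ring.
by rewrite !mulf_neq0.
Qed.

Lemma ineqs (R : realType) (th k u1 u2 : R) : 0 < k -> k < 1 -> -1 <= th -> th <= 1 ->
  0 <= u1 <= 1 -> 0 <= u2 <= 1 ->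
  (th <= 0 -> Dstart th k u1 u2 <= Dt u1 u2 /\ Dt u1 u2 <= D3t th k u1 u2) /\
  (0 <= th -> Dt u1 u2 <= Dstart th k u1 u2 /\ D3t th k u1 u2 <= Dt u1 u2).
Proof.
move=> k0 k1 thl thu /andP[u10 u11] /andP[u20 u21].
have a1 : 1 - k <= 1 - k * u1 by nra.
have a2 : 1 - k <= 1 - k * u2 by nra.
have a1' : 1 - k * u1 <= 1 by nra.
have a2' : 1 - k * u2 <= 1 by nra.
have c0 : 0 <= 1 - k by lra.
have c2lt : (1 - k) ^+ 2 < 1 by rewrite exprn_ilt1 //; lra.
have c3lt : (1 - k) ^+ 3 < 1 by rewrite exprn_ilt1 //; lra.
have c2ge : 0 <= (1 - k) ^+ 2 by rewrite exprn_ge0.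
have c3ge : 0 <= (1 - k) ^+ 3 by rewrite exprn_ge0.
have p2 : (1 - k) ^+ 2 <= (1 - k * u1) * (1 - k * u2) by rewrite expr2 ler_pM.
have p3 : (1 - k) ^+ 3 <= (1 - k * u1) * (1 - k * u2) * (1 - k).
  by rewrite exprSr; apply: ler_pM.
have q2 : (1 - k * u1) * (1 - k * u2) <= 1 by rewrite -[1]mulr1 ler_pM //; lra.
have Ds : 0 < 1 + th * (1 - k) ^+ 3 by nra.
have kc2 : k * (1 - k) ^+ 2 < 1 by nra.
have kc2ge : 0 <= k * (1 - k) ^+ 2 by rewrite mulr_ge0 // ltW.
have D3 : 0 < 1 - th * k * (1 - k) ^+ 2 by rewrite -mulrA; nra.
have uu : 0 <= u1 * u2 by rewrite mulr_ge0.
rewrite /Dstart /Dt /D3t; split=> th0; split.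
- rewrite -[X in _ <= X]mulr1 ler_wpM2l // ler_pdivrMr // mul1r; nra.
- rewrite -[X in X <= _]mulr1 ler_wpM2l // ler_pdivlMr // mul1r.
  have e : th * k * (1 - k * u1) * (1 - k * u2) = (th * k) * ((1 - k * u1) * (1 - k * u2)) by ring.
  have h : 0 <= (- (th * k)) * ((1 - k * u1) * (1 - k * u2) - (1 - k) ^+ 2).
    by rewrite mulr_ge0 // ?subr_ge0 // oppr_ge0; nra.
  rewrite e; lra.
- rewrite -[X in X <= _]mulr1 ler_wpM2l // ler_pdivlMr // mul1r.
  have h : 0 <= th * ((1 - k * u1) * (1 - k * u2) * (1 - k) - (1 - k) ^+ 3).
    by rewrite mulr_ge0 // ?subr_ge0.
  have e : th * (1 - k * u1) * (1 - k * u2) * (1 - k) = th * ((1 - k * u1) * (1 - k * u2) * (1 - k)) by ring.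
  rewrite e; lra.
- rewrite -[X in _ <= X]mulr1 ler_wpM2l // ler_pdivrMr // mul1r.
  have e : th * k * (1 - k * u1) * (1 - k * u2) = (th * k) * ((1 - k * u1) * (1 - k * u2)) by ring.
  have h : 0 <= (th * k) * ((1 - k * u1) * (1 - k * u2) - (1 - k) ^+ 2).
    by rewrite mulr_ge0 // ?subr_ge0 // mulr_ge0 // ltW.
  rewrite e; lra.
Qed.

Theorem mainTheorem12 (d : measure_display) (T : measurableType d) (R : realType)
  (P : probability T R) (X1 X2 X3 : {RV P >-> R}) (Fbar : R -> R)
  (theta t : R) :
  (forall w, 0 <= X1 w) -> (forall w, 0 <= X2 w) -> (forall w, 0 <= X3 w) ->
  (forall x, fine (P [set w | x < X1 w]) = Fbar x) ->
  (forall x, fine (P [set w | x < X2 w]) = Fbar x) ->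
  (forall x, fine (P [set w | x < X3 w]) = Fbar x) ->
  -1 <= theta <= 1 ->
  (forall x1 x2 x3,
     fine (P [set w | x1 < X1 w /\ x2 < X2 w /\ x3 < X3 w])
     = FGM3 theta (Fbar x1) (Fbar x2) (Fbar x3)) ->
  0 < t -> 0 < Fbar t < 1 ->
  let k := Fbar t in
  let Fbt := fun x => Fbar (t + x) / Fbar t in
  let Y1 := fun w => X1 w - t in
  let Y2 := fun w => X2 w - t in
  let Bt := [set w | t < X1 w /\ t < X2 w] in
  let B3 := [set w | t < X1 w /\ t < X2 w /\ X3 w <= t] in
  let Bs := [set w | t < X1 w /\ t < X2 w /\ t < X3 w] in
  (forall x1 x2, 0 <= x1 -> 0 <= x2 ->
     cond_surv2 P Y1 Y2 Bt x1 x2 = Dt (Fbt x1) (Fbt x2)) /\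
  (forall x1 x2, 0 <= x1 -> 0 <= x2 ->
     cond_surv2 P Y1 Y2 B3 x1 x2 = D3t theta k (Fbt x1) (Fbt x2)) /\
  (forall x1 x2, 0 <= x1 -> 0 <= x2 ->
     cond_surv2 P Y1 Y2 Bs x1 x2 = Dstart theta k (Fbt x1) (Fbt x2)) /\
  (theta <= 0 ->
     (forall u1 u2, 0 <= u1 <= 1 -> 0 <= u2 <= 1 ->
        Dstart theta k u1 u2 <= Dt u1 u2 /\ Dt u1 u2 <= D3t theta k u1 u2) /\
     uo_le2 P Y1 Y2 Bs Y1 Y2 Bt /\ uo_le2 P Y1 Y2 Bt Y1 Y2 B3) /\
  (0 <= theta ->
     (forall u1 u2, 0 <= u1 <= 1 -> 0 <= u2 <= 1 ->
        Dt u1 u2 <= Dstart theta k u1 u2 /\ D3t theta k u1 u2 <= Dt u1 u2) /\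
     uo_le2 P Y1 Y2 Bt Y1 Y2 Bs /\ uo_le2 P Y1 Y2 B3 Y1 Y2 Bt).
Proof.
move=> X1ge0 X2ge0 X3ge0 H1 H2 H3 /andP[thl thu] HF t0 /andP[k0 k1] k Fbt Y1 Y2 Bt B3 Bs.
pose S a b c := [set w | a < X1 w /\ b < X2 w /\ c < X3 w].
have mX1 a : measurable [set w | a < X1 w].
  by have := measurable_funPTI X1 (measurable_itv `]a, +oo[); rewrite /preimage /= ; under eq_set do rewrite in_itv /= andbT.
have mX2 a : measurable [set w | a < X2 w].
  by have := measurable_funPTI X2 (measurable_itv `]a, +oo[); rewrite /preimage /= ; under eq_set do rewrite in_itv /= andbT.
have mX3 a : measurable [set w | a < X3 w].
  by have := measurable_funPTI X3 (measurable_itv `]a, +oo[); rewrite /preimage /= ; under eq_set do rewrite in_itv /= andbT.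
have mS a b c : measurable (S a b c).
  have -> : S a b c = [set w | a < X1 w] `&` ([set w | b < X2 w] `&` [set w | c < X3 w]) by [].
  by apply: measurableI => //; apply: measurableI.
have fin A : measurable A -> P A \is a fin_num by move=> mA; apply: fin_num_measure.
have Fm1 : Fbar (-1) = 1.
  rewrite -H3; have -> : [set w | -1 < X3 w] = setT.
    by apply/seteqP; split=> w //= _; apply: (lt_le_trans _ (X3ge0 w)); rewrite ltrN10.
  by rewrite probability_setT.
have F01 x : 0 <= Fbar x <= 1.
  rewrite -H1 fine_ge0 ?measure_ge0 //=.
  by rewrite -[1%R]/(fine 1%E) fine_le ?fin ?probability_le1.
have Fmon x : 0 <= x -> Fbar (t + x) <= Fbar t.
  move=> x0; rewrite -!H1 fine_le ?fin //; apply: le_measure; rewrite ?inE //.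
  by move=> w /=; lra.
have PS a b c : fine (P (S a b c)) = FGM3 theta (Fbar a) (Fbar b) (Fbar c) by apply: HF.
have PD a b : fine (P [set w | a < X1 w /\ b < X2 w /\ X3 w <= t]) =
    FGM3 theta (Fbar a) (Fbar b) 1 - FGM3 theta (Fbar a) (Fbar b) k.
  have -> : [set w | a < X1 w /\ b < X2 w /\ X3 w <= t] = S a b (-1) `\` S a b t.
    apply/seteqP; split=> w /=.
      move=> [h1 [h2 h3]]; split; first by split=> //; split=> //; apply: (lt_le_trans _ (X3ge0 w)); rewrite ltrN10.
      by move=> [_ [_ h]]; lra.
    move=> [[h1 [h2 _]] h]; split=> //; split=> //; rewrite leNgt; apply/negP=> h3; exact: h.
  rewrite measureD //; last by rewrite (le_lt_trans (probability_le1 P (mS _ _ _))) // ltry.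
  have -> : S a b (-1) `&` S a b t = S a b t.
    by apply/seteqP; split=> w /=; [move=> [_ ?] // | move=> [h1 [h2 h3]]; split=> //; split=> //; split=> //; lra].
  by rewrite fineB ?fin // !PS Fm1.
have red B x1 x2 : (forall w, B w -> t < X1 w /\ t < X2 w) ->
    cond_surv2 P Y1 Y2 B x1 x2 = cond_surv2 P Y1 Y2 B (Num.max x1 0) (Num.max x2 0).
  move=> hB; rewrite /cond_surv2 /condP; congr (fine (P _) / _).
  apply/seteqP; split=> w /= [[h1 h2] hw]; have [a1 a2] := hB w hw; split=> //;
    rewrite /Y1 /Y2 ?gt_max in h1 h2 *.
    by split; apply/andP; split; lra.
  by move/andP: h1 => [h1 _]; move/andP: h2 => [h2 _].
have EBt x1 x2 : 0 <= x1 -> 0 <= x2 ->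
    [set w | x1 < Y1 w /\ x2 < Y2 w] `&` Bt = S (t + x1) (t + x2) (-1).
  move=> x10 x20; apply/seteqP; split=> w /=; rewrite /Y1 /Y2.
    move=> [[h1 h2] _]; split; first lra; split; first lra.
    by apply: (lt_le_trans _ (X3ge0 w)); rewrite ltrN10.
  by move=> [h1 [h2 _]]; split; split; lra.
have EBs x1 x2 : 0 <= x1 -> 0 <= x2 ->
    [set w | x1 < Y1 w /\ x2 < Y2 w] `&` Bs = S (t + x1) (t + x2) t.
  move=> x10 x20; apply/seteqP; split=> w /=; rewrite /Y1 /Y2.
    by move=> [[h1 h2] [_ [_ h3]]]; split; first lra; split; first lra.
  by move=> [h1 [h2 h3]]; split; [split|split; [|split]]; lra.
have EB3 x1 x2 : 0 <= x1 -> 0 <= x2 ->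
    [set w | x1 < Y1 w /\ x2 < Y2 w] `&` B3 = [set w | t + x1 < X1 w /\ t + x2 < X2 w /\ X3 w <= t].
  move=> x10 x20; apply/seteqP; split=> w /=; rewrite /Y1 /Y2.
    by move=> [[h1 h2] [_ [_ h3]]]; split; first lra; split; first lra.
  by move=> [h1 [h2 h3]]; split; [split|split; [|split]]; lra.
have PBt : fine (P Bt) = FGM3 theta k k 1.
  have -> : Bt = S t t (-1).
    apply/seteqP; split=> w /=; last by move=> [? [? _]].
    move=> [h1 h2]; split=> //; split=> //.
    by apply: (lt_le_trans _ (X3ge0 w)); rewrite ltrN10.
  by rewrite PS Fm1.
have PBs : fine (P Bs) = FGM3 theta k k k by rewrite PS.
have PB3 : fine (P B3) = FGM3 theta k k 1 - FGM3 theta k k k by rewrite PD.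
have kn0 : k != 0 by rewrite gt_eqF.
have k1n0 : 1 - k != 0 by rewrite subr_eq0 eq_sym lt_eqF.
have ineq u1 u2 := @ineqs R theta k u1 u2 k0 k1 thl thu.
have k0' : 0 < k := k0.
have k1' : k < 1 := k1.
have Ds : 1 + theta * (1 - k) ^+ 3 != 0.
  have c3lt : (1 - k) ^+ 3 < 1 by rewrite exprn_ilt1 //; lra.
  have c3ge : 0 <= (1 - k) ^+ 3 by rewrite exprn_ge0 //; lra.
  have h : 0 <= (theta + 1) * (1 - k) ^+ 3 by rewrite mulr_ge0 //; lra.
  by rewrite gt_eqF //; lra.
have D3 : 1 - theta * k * (1 - k) ^+ 2 != 0.
  have c2lt : (1 - k) ^+ 2 < 1 by rewrite exprn_ilt1 //; lra.
  have c2ge : 0 <= (1 - k) ^+ 2 by rewrite exprn_ge0 //; lra.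
  have kc2 : k * (1 - k) ^+ 2 < 1 by nra.
  have kc2ge : 0 <= k * (1 - k) ^+ 2 by rewrite mulr_ge0 // ltW.
  have h : 0 <= (1 - theta) * (k * (1 - k) ^+ 2) by rewrite mulr_ge0 //; lra.
  by rewrite gt_eqF // -mulrA; lra.
have hT x1 x2 : 0 <= x1 -> 0 <= x2 -> cond_surv2 P Y1 Y2 Bt x1 x2 = Dt (Fbt x1) (Fbt x2).
  by move=> ? ?; rewrite /cond_surv2 /condP EBt // PBt PS Fm1; exact: alg_t.
have hS x1 x2 : 0 <= x1 -> 0 <= x2 -> cond_surv2 P Y1 Y2 Bs x1 x2 = Dstart theta k (Fbt x1) (Fbt x2).
  by move=> ? ?; rewrite /cond_surv2 /condP EBs // PBs PS; exact: alg_s.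
have h3 x1 x2 : 0 <= x1 -> 0 <= x2 -> cond_surv2 P Y1 Y2 B3 x1 x2 = D3t theta k (Fbt x1) (Fbt x2).
  by move=> ? ?; rewrite /cond_surv2 /condP EB3 // PB3 PD; exact: alg_3.
have Fb01 x : 0 <= x -> 0 <= Fbt x <= 1.
  move=> x0; have /andP[f0 _] := F01 (t + x); apply/andP; split; first exact: divr_ge0 f0 (ltW k0).
  by rewrite ler_pdivrMr // mul1r Fmon.
have m0 (x : R) : 0 <= Num.max x 0 by rewrite le_max lexx orbT.
have rT x1 x2 := red Bt x1 x2 (fun w h => h).
have rS x1 x2 := red Bs x1 x2 (fun w (h : Bs w) => let: conj a (conj b _) := h in conj a b).
have r3 x1 x2 := red B3 x1 x2 (fun w (h : B3 w) => let: conj a (conj b _) := h in conj a b).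
split; first exact: hT.
split; first exact: h3.
split; first exact: hS.
split.
- move=> th0; split; first by move=> u1 u2 hu1 hu2; exact: ((ineq u1 u2 hu1 hu2).1 th0).
  split=> x1 x2.
    rewrite rS rT hS // hT //.
    exact: ((ineq _ _ (Fb01 _ (m0 x1)) (Fb01 _ (m0 x2))).1 th0).1.
  rewrite rT r3 hT // h3 //.
  exact: ((ineq _ _ (Fb01 _ (m0 x1)) (Fb01 _ (m0 x2))).1 th0).2.
- move=> th0; split; first by move=> u1 u2 hu1 hu2; exact: ((ineq u1 u2 hu1 hu2).2 th0).
  split=> x1 x2.
    rewrite rS rT hS // hT //.
    exact: ((ineq _ _ (Fb01 _ (m0 x1)) (Fb01 _ (m0 x2))).2 th0).1.
  rewrite rT r3 hT // h3 //.
  exact: ((ineq _ _ (Fb01 _ (m0 x1)) (Fb01 _ (m0 x2))).2 th0).2.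
Qed.
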